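(* Let $n\ge 2$, $b\ge 2$ and $1\le r<b$ be integers with $n\ge b-r-1$. Then the circulant graph $G_{nb+r,b}$ satisfies $\operatorname{box}(G_{nb+r,b})\le\chi(G_{nb+r,b})$.
   Context: For integers $a\ge 2b\ge 2$, $G_{a,b}$ is the graph with vertex set $\{0,1,\ldots,a-1\}$ in which distinct $u,v$ are adjacent if and only if $u\in\{v+b,v+b+1,\ldots,v+a-b\}$ with addition modulo $a$. The boxicity $\operatorname{box}(G)$ is the minimum nonnegative integer $k$ such that $G$ is isomorphic to the intersection graph of a family of boxes (Cartesian products of $k$ closed real intervals) in $\mathbb{R}^k$. $\chi(G)$ is the chromatic number. *)

(* Defs.v *)
From HB Require Import structures.
From Stdlib Require Import Reals.
From mathcomp Require Import all_boot.
Set Implicit Arguments. Unset Strict Implicit. Unset Printing Implicit Defensive.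

Definition Gab (a b : nat) : rel 'I_a :=
  fun u v => (u != v) && (b <= (u + a - v) %% a <= a - b).
Arguments Gab : clear implicits.

Definition colorable (T : finType) (e : rel T) (c : nat) : bool :=
  [exists f : {ffun T -> 'I_c}, [forall x, forall y, e x y ==> (f x != f y)]].

Lemma colorable_card (T : finType) (e : rel T) (irr : irreflexive e) :
  exists c, colorable e c.
Proof.
exists #|T|; apply/existsP; exists [ffun x => enum_rank x].
apply/forallP => x; apply/forallP => y; apply/implyP => exy.
rewrite !ffunE; apply/negP => /eqP /enum_rank_inj exy'.
by move: exy; rewrite exy' irr.
Qed.

Definition chi (T : finType) (e : rel T) (irr : irreflexive e) : nat :=
  ex_minn (colorable_card irr).

(* A representation of the graph (T, e) as the intersection graph of a family
   of boxes in R^k: vertex x is the box prod_{i<k} [lo x i, hi x i], and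
   distinct x, y are adjacent iff their boxes intersect, i.e. the intervals
   intersect in every coordinate. *)
Definition box_rep (T : finType) (e : rel T) (k : nat) : Prop :=
  exists lo hi : T -> nat -> R,
    (forall x i, (i < k)%N -> Rle (lo x i) (hi x i)) /\
    (forall x y, x <> y ->
       (e x y <-> forall i, (i < k)%N ->
          Rle (Rmax (lo x i) (lo y i)) (Rmin (hi x i) (hi y i)))).

(* box(G) <= c  (boxicity is the least k admitting a box representation) *)
Definition boxicity_le (T : finType) (e : rel T) (c : nat) : Prop :=
  exists k, (k <= c)%N /\ box_rep e k.

Lemma Gab_irr (a b : nat) : irreflexive (Gab a b).
Proof. by move=> u; rewrite /Gab eqxx. Qed.

(* Main.v *)
Require Import Defs.
From Stdlib Require Import Reals.
From mathcomp Require Import all_boot.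
From mathcomp Require Import zify.
From Stdlib Require Import Lia.
Set Implicit Arguments. Unset Strict Implicit. Unset Printing Implicit Defensive.

Definition tpos (a m v : nat) : nat := if (m <= v)%N then v - m else v + a - m.
Definition loN (b t : nat) : nat := if (t < b)%N then t.+1 else 0.
Definition hiN (b t : nat) : nat :=
  if (t < b)%N then t.+1 else if (t < 2*b)%N then t - b + 1 else 2*b+1.
Definition condN (a b m x y : nat) : bool :=
  (maxn (loN b (tpos a m x)) (loN b (tpos a m y)) <=
   minn (hiN b (tpos a m x)) (hiN b (tpos a m y)))%N.

Lemma dist_eq (a u v : nat) : (u < a)%N -> (v < a)%N ->
  (u + a - v) %% a = if (v <= u)%N then u - v else u + a - v.
Proof.
move=> ua va; case: leqP => h.
- have -> : u + a - v = (u - v) + a by lia.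
  rewrite modnDr modn_small //; lia.
- rewrite modn_small //; lia.
Qed.

Lemma lo_le_hi b t : (loN b t <= hiN b t)%N.
Proof. rewrite /loN /hiN; repeat case: ifP => ?; lia. Qed.

Lemma adj_core (a b N r m x y : nat) :
  a = N + r -> (2*b <= N)%N -> (1 <= b)%N -> (m <= N)%N -> (x < a)%N -> (y < a)%N -> x <> y ->
  (b <= (if (y <= x)%N then x - y else x + a - y) <= a - b)%N -> condN a b m x y.
Proof.
move=> -> h2b hb hm hx hy hxy; rewrite /condN /loN /hiN /tpos.
case: (leqP m x) => ?; case: (leqP m y) => ?; case: (leqP y x) => ?;
repeat case: ifP => ?; lia.
Qed.


Lemma nadj_core (a b N r m s x y : nat) :
  a = N + r -> (2*b <= N)%N -> (1 <= b)%N -> (m <= N)%N -> (x < a)%N -> y = m + s ->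
  (s < b)%N -> (y < a)%N -> x <> y ->
  (1 <= (if (y <= x)%N then x - y else x + a - y) < b)%N -> ~~ condN a b m x y.
Proof.
move=> -> h2b hb hm hx hys hs hy hxy; rewrite /condN /loN /hiN /tpos.
case: (leqP m x) => ?; case: (leqP m y) => ?; case: (leqP y x) => ?;
repeat case: ifP => ?; lia.
Qed.
Lemma col_lb n b r c : (2 <= n)%N -> (2 <= b)%N -> (1 <= r)%N -> (r < b)%N ->
  colorable (Gab (n*b+r) b) c -> (n < c)%N.
Proof.
move=> hn hb hr hrb /existsP [f /forallP Hf].
have h2b : (2 * b <= n * b)%N by rewrite leq_mul2r hn orbT.
have apos : (0 < n*b+r)%N by lia.
pose V (z : nat) : 'I_(n*b+r) := Ordinal (ltn_pmod z apos).
have adjV : forall z d, (b <= d <= n*b+r - b)%N -> Gab (n*b+r) b (V (z+d)) (V z).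
  move=> z d hd.
  have hs := ltn_pmod z apos.
  have hm : (z + d) %% (n*b+r) = if (z %% (n*b+r) + d < n*b+r)%N then z %% (n*b+r) + d
                                 else z %% (n*b+r) + d - (n*b+r).
    rewrite {1}(divn_eq z (n*b+r)) -addnA modnMDl.
    case: ifP => h; first by rewrite modn_small.
    have -> : z %% (n*b+r) + d = (z %% (n*b+r) + d - (n*b+r)) + (n*b+r) by lia.
    rewrite modnDr modn_small //; lia.
  have e : ((z + d) %% (n*b+r) + (n*b+r) - z %% (n*b+r)) %% (n*b+r) = d.
    rewrite dist_eq ?ltn_pmod // hm.
    move: hm hd hs; set s := z %% (n*b+r) => hm hd hs.
    case: (ltnP (s + d) (n*b+r)) => ?; case: ifP => ?; lia.
  rewrite /Gab /= e hd andbT.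
  apply/eqP => /(congr1 val) /= h.
  move: e; rewrite h addnC addnK modnn; lia.
have fne : forall z d, (b <= d <= n*b+r - b)%N -> f (V (z+d)) != f (V z).
  move=> z d hd; move: (Hf (V (z+d))) => /forallP /(_ (V z)) /implyP; apply.
  exact: adjV.
have fneP : forall z p, (1 <= p)%N -> (p < n)%N -> f (V (z + p*b)) != f (V z).
  move=> z p h1 h2; apply: fne.
  have : (1 * b <= p * b)%N by rewrite leq_mul2r h1 orbT.
  have : (p.+1 * b <= n * b)%N by rewrite leq_mul2r h2 orbT.
  rewrite mulSn; lia.
have inj : forall j, injective (fun k : 'I_n => f (V (j + k*b))).
  move=> j k l /= hkl; apply: val_inj => /=.
  case: (ltngtP k l) => // h.
  - have := fneP (j + k*b) (l - k); rewrite -addnA -mulnDl subnKC ?(ltnW h) // hkl.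
    rewrite eqxx => H; have := ltn_ord l; move=> hl; have := H ltac:(lia) ltac:(lia); by [].
  - have := fneP (j + l*b) (k - l); rewrite -addnA -mulnDl subnKC ?(ltnW h) // -hkl.
    rewrite eqxx => H; have := ltn_ord k; move=> hk; have := H ltac:(lia) ltac:(lia); by [].
rewrite ltnNge; apply/negP => hcn.
have hcard : (n <= c)%N by have := @leq_card _ _ _ (inj 0); rewrite !card_ord.
have per0 : forall j, f (V (j + n*b)) = f (V j).
  move=> j.
  have := @inj_card_onto _ _ _ (inj j); rewrite !card_ord => /(_ ltac:(lia) (f (V (j + n*b)))).
  case/codomP => k hk.
  case: (posnP k) => hk0.
    by rewrite hk hk0 mul0n addn0.
  have := fneP (j + k*b) (n - k); rewrite -addnA -mulnDl subnKC ?(ltnW (ltn_ord k)) // -hk.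
  rewrite eqxx => H; have := ltn_ord k; move=> hk'; have := H ltac:(lia) ltac:(lia); by [].
have per : forall z, f (V (z + r)) = f (V z).
  move=> z; rewrite -per0.
  have -> : V (z + r + n*b) = V z.
    apply: val_inj => /=; rewrite -addnA [r + _]addnC modnDr //.
  by [].
have it : forall m, f (V (m * r)) = f (V 0).
  elim=> [|m IH]; first by [].
  by rewrite mulSnr per.
have := fne 0 ((b %/ r).+1 * r).
rewrite add0n it eqxx.
have hdiv := divn_eq b r.
have hmod := ltn_pmod b hr.
have hle : (b %/ r * r <= b)%N by rewrite leq_divM.
rewrite mulSn.
move=> /(_ _)/implyP; lia.
Qed.
Lemma INR_le_iff p q : Rle (INR p) (INR q) <-> (p <= q)%N.
Proof. split => [/INR_le /leP //|/leP]; exact: le_INR. Qed.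

Lemma Rmax_INR p q : Rmax (INR p) (INR q) = INR (maxn p q).
Proof.
rewrite /Rmax; case: Rle_dec => h.
- by move/INR_le_iff: h => h; rewrite (maxn_idPr h).
- have h' : (q <= p)%N by apply/INR_le_iff; apply: Rlt_le; apply: Rnot_le_lt.
  by rewrite (maxn_idPl h').
Qed.

Lemma Rmin_INR p q : Rmin (INR p) (INR q) = INR (minn p q).
Proof.
rewrite /Rmin; case: Rle_dec => h.
- by move/INR_le_iff: h => h; rewrite (minn_idPl h).
- have h' : (q <= p)%N by apply/INR_le_iff; apply: Rlt_le; apply: Rnot_le_lt.
  by rewrite (minn_idPr h').
Qed.

Lemma nadj_exists n b r (x y : nat) : (2 <= n)%N -> (1 <= b)%N -> (r < b)%N ->
  (x < n*b+r)%N -> (y < n*b+r)%N -> x <> y ->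
  (1 <= (if (y <= x)%N then x - y else x + (n*b+r) - y) < b)%N ->
  exists k, (k < n.+1)%N /\ ~~ condN (n*b+r) b (k*b) x y.
Proof.
move=> hn hb hrb hx hy hxy hd.
have h2b : (2 * b <= n * b)%N by rewrite leq_mul2r hn orbT.
have hq : (y %/ b < n.+1)%N by rewrite ltn_divLR // mulSn; lia.
exists (y %/ b); split => //.
apply: (@nadj_core _ b (n*b) r _ (y %% b)) => //.
- by rewrite leq_mul2r -ltnS hq orbT.
- exact: divn_eq.
- by rewrite ltn_pmod.
Qed.

Lemma condNC a b m x y : condN a b m x y = condN a b m y x.
Proof. by rewrite /condN maxnC minnC. Qed.

Theorem theorem4p2 (n b r : nat) :
  (2 <= n)%N -> (2 <= b)%N -> (1 <= r)%N -> (r < b)%N -> (b - r - 1 <= n)%N ->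
  boxicity_le (Gab (n * b + r) b) (chi (@Gab_irr (n * b + r) b)).
Proof.
move=> hn hb hr hrb _.
exists n.+1; split.
  rewrite /chi; case: ex_minnP => c Hc _; exact: col_lb Hc.
have h2b : (2 * b <= n * b)%N by rewrite leq_mul2r hn orbT.
exists (fun (x : 'I_(n*b+r)) i => INR (loN b (tpos (n*b+r) (i*b) x))).
exists (fun (x : 'I_(n*b+r)) i => INR (hiN b (tpos (n*b+r) (i*b) x))).
split.
  by move=> x i _; apply/INR_le_iff; exact: lo_le_hi.
move=> x y hxy.
have hxy' : (x : nat) <> y by move=> h; apply: hxy; exact: val_inj.
have hx := ltn_ord x; have hy := ltn_ord y.
rewrite /Gab; split.
- move=> /andP [_ hd] i hi.
  rewrite Rmax_INR Rmin_INR; apply/INR_le_iff.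
  apply: (@adj_core _ b (n*b) r) => //.
  + lia.
  + by rewrite leq_mul2r -ltnS hi orbT.
  + by rewrite -dist_eq.
- move=> H; apply/andP; split; first by apply/eqP.
  have Hc : forall i, (i < n.+1)%N -> condN (n*b+r) b (i*b) x y.
    move=> i hi; have := H i hi; rewrite Rmax_INR Rmin_INR => /INR_le_iff //.
  rewrite dist_eq //.
  have e2 := dist_eq hy hx.
  case: (leqP b (if (y <= x)%N then x - y else x + (n*b+r) - y)) => h1.
  + case: (leqP (if (y <= x)%N then x - y else x + (n*b+r) - y) (n*b+r-b)) => h2.
      by [].
    have [k [hk hn']] : exists k, (k < n.+1)%N /\ ~~ condN (n*b+r) b (k*b) y x.
      apply: nadj_exists => //; try lia.
      move: h1 h2; case: ifP => ?; case: ifP => ?; lia.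
    by move: (Hc k hk); rewrite condNC (negbTE hn').
  + have [k [hk hn']] : exists k, (k < n.+1)%N /\ ~~ condN (n*b+r) b (k*b) x y.
      apply: nadj_exists => //; try lia.
      move: h1; case: ifP => ?; lia.
    by move: (Hc k hk); rewrite (negbTE hn').
Qed.
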